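(* Let $(X,d)$ be a metric space and $\mu$ a non-atomic Borel measure on $X$. For every path $\gamma:[a,b]\to X$ in $\Gamma^\mu$ there is a unique map $\gamma_h:[0,h(\gamma)]\to X$ such that $\gamma=\gamma_h\circ\nu_\gamma$; moreover $\mathrm{Im}(\gamma)=\mathrm{Im}(\gamma_h)$ and $\nu_{\gamma_h}(t)=t$ for all $t\in[0,h(\gamma)]$ (so $\gamma_h=\gamma_h\circ\nu_{\gamma_h}$).
   Context: A path is a continuous map $\gamma:[a,b]\to X$; a subpath is a restriction to a subinterval, trivial if that interval is a point; $\mathrm{Im}(\gamma)=\gamma([a,b])$. $\mu$ non-atomic: $\mu(\{x\})=0$ for all $x\in X$. $\Gamma^\mu$ is the set of all non-trivial injective paths $\gamma$ in $X$ with $0<\mu(\mathrm{Im}(\tilde\gamma))<\infty$ for every non-trivial subpath $\tilde\gamma$ of $\gamma$. For $\gamma\in\Gamma^\mu$, $h(\gamma)=\mu(\mathrm{Im}(\gamma))$, and the $\mu$-arc length of $\gamma:[a,b]\to X$ is $\nu_\gamma:[a,b]\to\mathbb R$, $\nu_\gamma(x)=\mu(\gamma([a,x]))$. The map $\gamma_h$ is called the $\mu$-arc length parametrization of $\gamma$. *)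

(* Defs.v *)
From HB Require Import structures.
From mathcomp Require Import all_boot all_order all_algebra.
From mathcomp Require Import all_classical all_reals all_analysis.
Set Implicit Arguments. Unset Strict Implicit. Unset Printing Implicit Defensive.
Import Order.TTheory GRing.Theory Num.Theory.
Import numFieldNormedType.Exports.
Local Open Scope classical_set_scope.
Local Open Scope ring_scope.

Notation borelType X := (g_sigma_algebraType (@open X)).

Section defs.
Context {R : realType} {X : ptopologicalType}.
Variable mu : set (borelType X) -> \bar R.

Definition non_atomic := forall x : X, mu [set x] = 0%E.

(* gamma : [a,b] -> X (represented as a function R -> X, only its values on
   [a,b] matter) belongs to Gamma^mu: non-trivial (a < b), a path (continuous
   on [a,b]), injective on [a,b], and every non-trivial subpath
   gamma|[c,d] (a <= c < d <= b) has 0 < mu(Im) < +oo. *)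
Definition in_Gamma (a b : R) (gamma : R -> X) :=
  [/\ a < b,
      {within `[a, b], continuous gamma},
      {in `[a, b] &, injective gamma} &
      forall c d : R, a <= c -> c < d -> d <= b ->
        (0 < mu (gamma @` [set` `[c, d]]) < +oo)%E].

(* h(gamma) = mu(Im gamma) for gamma : [a,b] -> X (finite for gamma in Gamma^mu) *)
Definition hgt (a b : R) (gamma : R -> X) : R := fine (mu (gamma @` `[a, b])).

Definition nu (a : R) (gamma : R -> X) (x : R) : R := fine (mu (gamma @` [set` `[a, x]])).

End defs.

(* Main.v *)
Require Import Defs.
From HB Require Import structures.
From mathcomp Require Import all_boot all_order all_algebra.
From mathcomp Require Import all_classical all_reals all_analysis.
From mathcomp Require Import lra.
Import Order.TTheory GRing.Theory Num.Theory.
Import numFieldNormedType.Exports.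
Local Open Scope classical_set_scope.
Local Open Scope ring_scope.

Section S.
Context (R : realType) (X : pseudoPMetricType R) (HX : hausdorff_space X)
  (mu : {measure set (borelType X) -> \bar R}) (Hna : non_atomic mu).

Lemma closed_meas (A : set X) : closed A -> measurable (A : set (borelType X)).
Proof.
move=> cA; rewrite -(setCK A); apply: measurableC.
apply: sub_gen_smallest; exact: closed_openC.
Qed.

Lemma set1_meas (x : X) : measurable ([set x] : set (borelType X)).
Proof. apply: closed_meas; apply: compact_closed => //; exact: compact_set1. Qed.

Variables (a b : R) (gamma : R -> X).
Hypothesis Hab : a < b.
Hypothesis Hc : {within `[a, b], continuous gamma}.
Hypothesis Hi : {in `[a, b] &, injective gamma}.
Hypothesis Hm : forall c d : R, a <= c -> c < d -> d <= b ->
        (0 < mu (gamma @` [set` `[c, d]]) < +oo)%E.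

Let G c d := gamma @` [set` `[c, d]].

Lemma Gmeas {c d} : a <= c -> d <= b -> measurable (G c d : set (borelType X)).
Proof.
move=> ac db; apply: closed_meas; apply: compact_closed => //.
apply: continuous_compact; last exact: segment_compact.
apply: continuous_subspaceW Hc => x /=; rewrite !in_itv /= => /andP[cx xd].
by rewrite (le_trans ac cx) (le_trans xd db).
Qed.

Lemma Gsmall {c d} : d <= c -> G c d `<=` [set gamma c].
Proof.
move=> dc _ [t /= + <-]; rewrite in_itv /= => /andP[ct td].
by have -> : t = c by apply/eqP; rewrite eq_le ct (le_trans td dc).
Qed.

Lemma Gfin {c d} : a <= c -> d <= b -> (0 <= mu (G c d) < +oo)%E.
Proof.
move=> ac db; rewrite measure_ge0 /=.
have [cd|dc] := ltP c d; first by case/andP: (Hm _ _ ac cd db).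
have := @le_measure _ _ _ mu (G c d) [set gamma c].
rewrite !inE => /(_ (Gmeas ac db) (set1_meas _) (Gsmall dc)).
move/le_lt_trans; apply; apply: (le_lt_trans _ (ltry 0%R)); rewrite le_eqVlt; apply/orP; left; apply/eqP; exact: Hna.
Qed.


Lemma inab {t} : a <= t -> t <= b -> t \in `[a, b].
Proof. by move=> h1 h2; rewrite in_itv /= h1 h2. Qed.

Lemma Gadd {x y} : a <= x -> x <= y -> y <= b ->
  mu (G a y) = (mu (G a x) + mu (G x y))%E.
Proof.
move=> ax xy yb.
have Tm : measurable ((G x y `\ gamma x) : set (borelType X)).
  by apply: measurableD; [exact: Gmeas|exact: set1_meas].
have e1 : G a y = G a x `|` (G x y `\ gamma x).
  apply/seteqP; split.
  - move=> _ [t /= + <-]; rewrite in_itv /= => /andP[at0 ty].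
    have [tx|xt] := leP t x.
      by left; exists t => //=; rewrite in_itv /= at0 tx.
    right; split; first by exists t => //=; rewrite in_itv /= (ltW xt) ty.
    move=> /= eq; have := Hi _ _ (inab at0 (le_trans ty yb)) (inab ax (le_trans xy yb)) eq.
    by move=> ext; move: xt; rewrite ext ltxx.
  - move=> _ [[t /= + <-]|[[t /= + <-] _]]; rewrite in_itv /= => /andP[h1 h2];
      exists t => //=; rewrite in_itv /=; apply/andP; split; lra.
have d1 : G a x `&` (G x y `\ gamma x) = set0.
  apply/seteqP; split => // z [[t /= + <-] [[s /= + es] ne]].
  rewrite !in_itv /= => /andP[h1 h2] /andP[h3 h4].
  have st := Hi _ _ (inab (le_trans ax h3) (le_trans h4 yb)) (inab h1 (le_trans h2 (le_trans xy yb))) es.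
  have sx : s = x by apply/eqP; rewrite eq_le h3 andbT st.
  by apply: ne; rewrite /= -es sx.
have e2 : G x y = [set gamma x] `|` (G x y `\ gamma x).
  apply/seteqP; split.
  - move=> z Gz; have [->|ne] := pselect (z = gamma x); [by left|by right].
  - by move=> z [->|[]] //; exists x => //=; rewrite in_itv /= lexx xy.
have d2 : [set gamma x] `&` (G x y `\ gamma x) = set0.
  by apply/seteqP; split => // z0 [/= -> [_ /(_ erefl)]].
rewrite e1 (measureU mu (Gmeas (lexx a) (le_trans xy yb)) Tm d1); congr (_ + _)%E.
rewrite [in RHS]e2 (measureU mu (set1_meas _) Tm d2).
by rewrite [X in (X + _)%E](_ : _ = 0%E) ?add0e //; exact: Hna.
Qed.

Let nuf x := nu mu a gamma x.

Lemma finnum {c d} : a <= c -> d <= b -> mu (G c d) \is a fin_num.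
Proof. by move=> ac db; case/andP: (Gfin ac db) => h1 h2; rewrite ge0_fin_numE. Qed.

Lemma nu_diff {x y} : a <= x -> x <= y -> y <= b ->
  nuf y - nuf x = fine (mu (G x y)).
Proof.
move=> ax xy yb.
change (fine (mu (G a y)) - fine (mu (G a x)) = fine (mu (G x y))).
have xb := le_trans xy yb.
by rewrite (Gadd ax xy yb) fineD ?(finnum (lexx a) xb) ?(finnum ax yb) // addrAC subrr add0r.
Qed.

Lemma nu_lt {x y} : a <= x -> x < y -> y <= b -> nuf x < nuf y.
Proof.
move=> ax xy yb; rewrite -subr_gt0 (nu_diff ax (ltW xy) yb).
exact: fine_gt0 (Hm _ _ ax xy yb).
Qed.

Lemma nu_le {x y} : a <= x -> x <= y -> y <= b -> nuf x <= nuf y.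
Proof.
move=> ax; rewrite le_eqVlt => /orP[/eqP -> //|xy yb].
exact: ltW (nu_lt ax xy yb).
Qed.

Lemma nu_a : nuf a = 0.
Proof.
change (fine (mu (G a a)) = 0).
have := @le_measure _ _ _ mu (G a a) [set gamma a].
rewrite !inE => /(_ (Gmeas (lexx a) (ltW Hab)) (set1_meas _) (Gsmall (lexx a))).
rewrite [X in (_ <= X)%E -> _](_ : _ = 0%E); last exact: Hna.
move=> h; have -> : mu (G a a) = 0%E by apply/eqP; rewrite eq_le h measure_ge0.
by [].
Qed.

Lemma inv_le {m n : nat} : (n <= m)%N -> m.+1%:R^-1 <= n.+1%:R^-1 :> R.
Proof. by move=> nm; rewrite lef_pV2 ?posrE ?ltr0Sn // ler_nat ltnS. Qed.

Lemma cont {x} : a <= x -> x <= b -> forall eps : R, 0 < eps ->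
  exists2 del, 0 < del & forall c d, a <= c -> c <= x -> x <= d -> d <= b ->
    d - c < del -> (mu (G c d) < eps%:E)%E.
Proof.
move=> ax xb eps eps0.
pose F := fun n : nat => G (Num.max a (x - n.+1%:R^-1)) (Num.min b (x + n.+1%:R^-1)).
have Fm n : measurable (F n : set (borelType X)).
  by apply: Gmeas; [rewrite le_max lexx|rewrite ge_min lexx].
have F0 : (mu (F 0%N) < +oo)%E.
  by case/andP: (@Gfin (Num.max a (x - 1%:R^-1)) (Num.min b (x + 1%:R^-1))
    ltac:(by rewrite le_max lexx) ltac:(by rewrite ge_min lexx)).
have Fdec : nonincreasing_seq F.
  move=> n m nm; apply/subsetPset; apply: image_subset => t /=.
  rewrite !in_itv /= !ge_max !le_min => /andP[/andP[h1 h2] /andP[h3 h4]].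
  have := inv_le nm; rewrite h1 h3 /= ; move: h2 h4; generalize (m.+1%:R^-1 : R) (n.+1%:R^-1 : R) => p q *; apply/andP; split; lra.
have Fcap : \bigcap_n F n = [set gamma x].
  apply/seteqP; split.
  - move=> z Fz; have [t0 + et0] := Fz 0%N I.
    rewrite /= in_itv /= ge_max le_min => /andP[/andP[h1 h2] /andP[h3 h4]].
    have key : forall k, x - k.+1%:R^-1 <= t0 <= x + k.+1%:R^-1.
      move=> k; have [s + es] := Fz k I.
      rewrite /= in_itv /= ge_max le_min => /andP[/andP[k1 k2] /andP[k3 k4]].
      have st : s = t0 by apply: Hi; [exact: inab|exact: inab|by rewrite es et0].
      by rewrite -st k2 k4.
    rewrite /= -et0; congr gamma.
    have [t0x|xt0|->] := ltgtP t0 x; last by [].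
    + have [k hk] := ltr_add_invr t0x; case/andP: (key k); move: hk; generalize (k.+1%:R^-1 : R) => p *; lra.
    + have [k hk] := ltr_add_invr xt0; case/andP: (key k); move: hk; generalize (k.+1%:R^-1 : R) => p *; lra.
  - move=> _ -> n _; exists x => //=; rewrite in_itv /= ge_max le_min ax xb /=.
    have : 0 < n.+1%:R^-1 :> R by rewrite invr_gt0 ltr0Sn.
    generalize (n.+1%:R^-1 : R) => p h; apply/andP; split; lra.
have Fcm : measurable (\bigcap_n F n : set (borelType X)).
  by rewrite Fcap; exact: set1_meas.
have cv0 : (mu \o F) @ \oo --> (0%E : \bar R).
  have := nonincreasing_cvg_mu F0 Fm Fcm Fdec.
  by rewrite [X in _ --> X](_ : _ = 0%E) // Fcap; exact: Hna.
have : \forall n \near \oo, (mu (F n) < eps%:E)%E.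
  apply: (cv0 [set y | (y < eps%:E)%E]); apply/nbhs_EFin; near=> y; rewrite /= lte_fin; near: y.
  exact: lt_nbhsl.
case=> N _ /(_ N (leqnn N)) HN.
exists N.+1%:R^-1; first by rewrite invr_gt0 ltr0Sn.
move=> c d ac cx xd db dc; apply: le_lt_trans HN.
have := @le_measure _ _ _ mu (G c d) (F N).
rewrite !inE; apply => //; first exact: Gmeas.
apply: image_subset => t /=; rewrite !in_itv /= ge_max le_min => /andP[h1 h2].
have dc2 : d - c < (N.+1%:R^-1 : R) := dc; move: dc2 h1 h2; generalize (N.+1%:R^-1 : R) => p *; apply/andP; split; apply/andP; split; lra.
Unshelve. all: by end_near.
Qed.

Let clamp y := Num.max a (Num.min y b).

Lemma clamp_cases y : (y < a /\ clamp y = a) \/ (a <= y /\ y <= b /\ clamp y = y)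
  \/ (b < y /\ clamp y = b).
Proof.
rewrite /clamp; have [yb|by0] := leP y b.
- have [ay|ya] := leP a y.
  + by right; left.
  + by left.
- by rewrite max_r; [right; right | exact: ltW].
Qed.

Lemma clamp_in y : a <= clamp y /\ clamp y <= b.
Proof.
have := ltW Hab.
by case: (clamp_cases y) => [[h ->]|[[h1 [h2 ->]]|[h ->]]]; split; rewrite ?lexx.
Qed.

Lemma clamp_id y : a <= y -> y <= b -> clamp y = y.
Proof.
move=> h1 h2; case: (clamp_cases y) => [[h _]|[[_ [_ ->]]|[h _]]] //; lra.
Qed.

Lemma clamp_lip y z : `|clamp y - clamp z| <= `|y - z|.
Proof.
have h1 := ler_norm (y - z); have h2 : -(y - z) <= `|y - z| by rewrite -normrN ler_norm.
have [r rE] : exists r : R, `|y - z| = r by eexists.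
rewrite rE in h1 h2 *.
rewrite ler_norml; have := Hab.
by case: (clamp_cases y) => [[? ->]|[[? [? ->]]|[? ->]]];
   case: (clamp_cases z) => [[? ->]|[[? [? ->]]|[? ->]]] => ?; apply/andP; split; lra.
Qed.

Lemma fineltE (v : \bar R) (e : R) : (0 <= v)%E -> (v < e%:E)%E -> fine v < e.
Proof.
move=> v0 ve; have vf : v \is a fin_num by rewrite ge0_fin_numE // (lt_trans ve) ?ltry.
by rewrite -lte_fin fineK.
Qed.

Lemma f_cont : continuous (fun y => nuf (clamp y)).
Proof.
move=> x; apply/cvgrPdist_lt => eps eps0.
have [ax xb] := clamp_in x.
have [del del0 H] := cont ax xb _ eps0.
exists del => //= t xt.
have [at0 tb] := clamp_in t.
have ct : `|clamp x - clamp t| < del by apply: le_lt_trans (clamp_lip x t) _.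
have [le|lt] := leP (clamp x) (clamp t).
- rewrite distrC ger0_norm; last by rewrite subr_ge0; exact: nu_le.
  rewrite (nu_diff ax le tb); apply: fineltE; first exact: measure_ge0.
  apply: H => //.
  by move: ct; rewrite distrC ger0_norm // subr_ge0.
- rewrite ger0_norm; last by rewrite subr_ge0; apply: nu_le => //; exact: ltW.
  rewrite (nu_diff at0 (ltW lt) xb); apply: fineltE; first exact: measure_ge0.
  apply: H => //; try exact: ltW.
  by move: ct; rewrite ger0_norm // subr_ge0 ltW.
Qed.

Lemma nu_surj {t} : 0 <= t -> t <= nuf b -> exists2 c, c \in `[a, b] & nuf c = t.
Proof.
move=> t0 tb.
have nb0 : 0 <= nuf b by rewrite -nu_a; apply: nu_le => //; exact: ltW.
have := @IVT R (fun y => nuf (clamp y)) a b t (ltW Hab)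
  (continuous_subspaceT f_cont).
rewrite /= !clamp_id ?lexx ?(ltW Hab) // nu_a (min_l nb0) (max_r nb0) t0 tb.
move=> /(_ isT) [c cab <-]; exists c => //.
by move: cab; rewrite in_itv /= => /andP[h1 h2]; rewrite clamp_id.
Qed.

Lemma nu_inj {c c'} : c \in `[a, b] -> c' \in `[a, b] -> nuf c = nuf c' -> c = c'.
Proof.
rewrite !in_itv /= => /andP[h1 h2] /andP[h3 h4] e.
have [lt|lt|//] := ltgtP c c'.
- by have := nu_lt h1 lt h4; rewrite e ltxx.
- by have := nu_lt h3 lt h2; rewrite e ltxx.
Qed.

Let gh t := gamma (xget a [set c | c \in `[a, b] /\ nuf c = t]).

Lemma gh_nu c : c \in `[a, b] -> gh (nuf c) = gamma c.
Proof.
move=> cab; rewrite /gh; case: (xgetPex a (P := [set c' | c' \in `[a, b] /\ nuf c' = nuf c])).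
  by exists c.
by move=> h1 h2; rewrite (nu_inj h1 cab h2).
Qed.

Lemma main_sec : exists gamma_h : R -> X,
    [/\ {in [set` `[a, b]], forall t, gamma t = gamma_h (nu mu a gamma t)},
        (forall g : R -> X,
           {in [set` `[a, b]], forall t, gamma t = g (nu mu a gamma t)} ->
           {in [set` `[0, hgt mu a b gamma]], forall t, g t = gamma_h t}),
        gamma @` [set` `[a, b]] = gamma_h @` [set` `[0, hgt mu a b gamma]] &
        {in [set` `[0, hgt mu a b gamma]], forall t, nu mu 0 gamma_h t = t}].
Proof.
have hE : hgt mu a b gamma = nuf b by [].
rewrite hE.
exists gh; split.
- by move=> t; rewrite inE /= => ht; rewrite gh_nu.
- move=> g Hg t; rewrite inE /= in_itv /= => /andP[t0 tb].
  have [c cab <-] := nu_surj t0 tb.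
  by rewrite gh_nu // -Hg // inE.
- apply/seteqP; split.
  + move=> _ [t /= ht <-]; exists (nuf t); last exact: gh_nu.
    move: ht; rewrite /= !in_itv /= => /andP[h1 h2].
    by rewrite -nu_a !nu_le ?lexx ?(ltW Hab).
  + move=> _ [t /= + <-]; rewrite in_itv /= => /andP[t0 tb].
    have [c cab <-] := nu_surj t0 tb.
    by exists c => //; rewrite gh_nu.
- move=> t; rewrite inE /= in_itv /= => /andP[t0 tb].
  have [c cab ec] := nu_surj t0 tb.
  have E : gh @` [set` `[0, t]] = G a c.
    apply/seteqP; split.
    + move=> _ [u /= + <-]; rewrite in_itv /= => /andP[u0 ut].
      have [c' cab' ec'] := nu_surj u0 (le_trans ut tb).
      rewrite -ec'; exists c'; last by rewrite gh_nu.
      move: cab cab' ut; rewrite /= !in_itv /= -ec -ec' => /andP[h1 h2] /andP[h3 h4] ut.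
      rewrite h3 /=; rewrite leNgt; apply/negP => lt.
      by have := nu_lt h1 lt h4; rewrite ltNge ut.
    + move=> _ [c' /= + <-]; rewrite in_itv /= => /andP[h1 h2].
      move: cab; rewrite in_itv /= => /andP[h3 h4].
      exists (nuf c'); last by rewrite gh_nu // inab // (le_trans h2 h4).
      rewrite /= in_itv /= -ec -nu_a !nu_le ?lexx //; exact: le_trans h2 h4.
  by rewrite /nu E.
Qed.

End S.

Theorem theorem2p2 (R : realType) (X : pseudoPMetricType R)
  (HX : hausdorff_space X)
  (mu : {measure set (borelType X) -> \bar R})
  (Hna : non_atomic mu)
  (a b : R) (gamma : R -> X) :
  in_Gamma mu a b gamma ->
  exists gamma_h : R -> X,
    [/\ (* gamma = gamma_h o nu_gamma on [a,b] *)
        {in [set` `[a, b]], forall t, gamma t = gamma_h (nu mu a gamma t)},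
        (* uniqueness of gamma_h as a map [0, h(gamma)] -> X *)
        (forall g : R -> X,
           {in [set` `[a, b]], forall t, gamma t = g (nu mu a gamma t)} ->
           {in [set` `[0, hgt mu a b gamma]], forall t, g t = gamma_h t}),
        (* Im(gamma) = Im(gamma_h) *)
        gamma @` [set` `[a, b]] = gamma_h @` [set` `[0, hgt mu a b gamma]] &
        (* nu_{gamma_h}(t) = t on [0, h(gamma)] *)
        {in [set` `[0, hgt mu a b gamma]], forall t, nu mu 0 gamma_h t = t}].
Proof.
case=> Hab Hc Hi Hm.
exact: (@main_sec R X HX mu Hna a b gamma Hab Hc Hi Hm).
Qed.
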